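(* Let $n\ge2$, $l\ge1$, $\mathfrak g=C^{(1)}_n$, $B$ the level-$l$ perfect crystal of the context, $\lambda=l\Lambda_0$, $d=2n$, and $i^{(j)}_a=a-1$ for $1\le a\le n+1$, $i^{(j)}_a=2n+1-a$ for $n+2\le a\le 2n$ (all $j\ge1$). Then: (II) $B^{(j)}_d=B$ for all $j\ge1$; (III) $\langle\lambda_j,h_{i^{(j)}_a}\rangle\le\varepsilon_{i^{(j)}_a}(b)$ for all $j\ge1$, $1\le a\le d$, $b\in B^{(j)}_{a-1}$; (IV') for all $j\ge1$, $a=1,\dots,d$: $\varepsilon_{i^{(j)}_{a+1}}(b^{(j)}_a)=0$, $\varphi_{i^{(j)}_{a+1}}(b^{(j)}_a)>0$ (with $i^{(j)}_{d+1}:=i^{(j+1)}_1$), and $b^{(j+1)}_0=\tilde f_{i^{(j+1)}_1}^mb^{(j)}_d$ with $m=\langle\lambda_{j+1},h_{i^{(j+1)}_1}\rangle$. Moreover $B^{(j)}_0=\{(0,\dots,0)\}$, $B^{(j)}_{2n}=B$; for $1\le a\le n$, $B^{(j)}_a$ is the set of $b\in B$ with all coordinates $0$ except possibly $x_1,\dots,x_a$; for $1\le a\le n-1$, $B^{(j)}_{n+a}$ is the set of $b\in B$ with all coordinates $0$ except possibly $x_1,\dots,x_n,\bar x_n,\dots,\bar x_{n-a+1}$. Also $b^{(j)}_0=(0,\dots,0)$, and for $1\le a\le n$, $b^{(j)}_a$ has $x_a=2l$ and $b^{(j)}_{n+a}$ has $\bar x_{n-a+1}=2l$, all other coordinates 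$0$.
   Context: $(x)_+=\max(x,0)$. $B=\{(x_1,\dots,x_n,\bar x_n,\dots,\bar x_1)\in\mathbb Z^{2n}: x_i,\bar x_i\ge0,\ \sum_{i=1}^n(x_i+\bar x_i)\le 2l,\ \sum_{i=1}^n(x_i+\bar x_i)\in2\mathbb Z\}$. Crystal structure: $\tilde f_0b=(x_1+2,x_2,\dots,\bar x_2,\bar x_1)$ if $x_1\ge\bar x_1$, $(x_1+1,x_2,\dots,\bar x_2,\bar x_1-1)$ if $x_1=\bar x_1-1$, $(x_1,x_2,\dots,\bar x_2,\bar x_1-2)$ if $x_1\le\bar x_1-2$; for $1\le i\le n-1$, $\tilde f_ib$ replaces $(x_i,x_{i+1})$ by $(x_i-1,x_{i+1}+1)$ if $x_{i+1}\ge\bar x_{i+1}$, and $(\bar x_{i+1},\bar x_i)$ by $(\bar x_{i+1}-1,\bar x_i+1)$ if $x_{i+1}<\bar x_{i+1}$; $\tilde f_nb$ replaces $(x_n,\bar x_n)$ by $(x_n-1,\bar x_n+1)$; $\tilde e_ib=b'$ iff $\tilde f_ib'=b$; results outside $B$ mean $0$. With $s(b)=\sum_{i=1}^n(x_i+\bar x_i)$: $\varphi_0(b)=l-\tfrac12s(b)+(\bar x_1-x_1)_+$, $\varepsilon_0(b)=l-\tfrac12 s(b)+(x_1-\bar x_1)_+$; $\varphi_i(b)=x_i+(\bar x_{i+1}-x_{i+1})_+$, $\varepsilon_i(b)=\bar x_i+(x_{i+1}-\bar x_{i+1})_+$ ($1\le i\le n-1$); $\varphi_n(b)=x_n$, $\varepsilon_n(b)=\bar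 x_n$. For $\lambda=l\Lambda_0$: $\lambda_j=l\Lambda_0$ and $\overline b_j=(0,\dots,0)$ for all $j$; $\langle\lambda_j,h_i\rangle$ is the coefficient of $\Lambda_i$ in $\lambda_j$. Given $d$, $i^{(j)}_a$: $B^{(j)}_0=\{\overline b_j\}$, $B^{(j)}_a=\bigcup_{n\ge0}\tilde f_{i^{(j)}_a}^nB^{(j)}_{a-1}\setminus\{0\}$; $b^{(j)}_0=\overline b_j$, $b^{(j)}_a=\tilde f_{i^{(j)}_a}^{\varphi_{i^{(j)}_a}(b^{(j)}_{a-1})}b^{(j)}_{a-1}$. *)

(* Defs.v *)
From mathcomp Require Import all_boot all_order all_algebra.
Set Implicit Arguments. Unset Strict Implicit. Unset Printing Implicit Defensive.
Import Order.TTheory GRing.Theory Num.Theory.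
Local Open Scope ring_scope.

(* An element (x_1..x_n, xbar_n..xbar_1) is encoded as the pair
   (x, xb) with x`_(i-1) = x_i and xb`_(i-1) = xbar_i. *)
Definition vec := (seq int * seq int)%type.

Definition getx (b : vec) (i : nat) : int := nth 0 b.1 i.-1.
Definition getxb (b : vec) (i : nat) : int := nth 0 b.2 i.-1.
Definition upd1 (s : seq int) (i : nat) (v : int) : seq int := set_nth 0 s i.-1 v.

Definition ssum (b : vec) : int := \sum_(v <- b.1 ++ b.2) v.

Definition inB (n l : nat) (b : vec) : bool :=
  [&& size b.1 == n, size b.2 == n, all (fun v : int => 0 <= v) (b.1 ++ b.2),
      ssum b <= 2 * (l%:Z) & ~~ odd (absz (ssum b))].

Definition zerov (n : nat) : vec := (nseq n 0, nseq n 0).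

Definition pos (x : int) : int := Num.max x 0.

(* raw action of f_i (before checking the result lies in B) *)
Definition f_raw (n : nat) (i : nat) (b : vec) : vec :=
  if i == 0%N then
    let x1 := getx b 1 in let y1 := getxb b 1 in
    if y1 <= x1 then (upd1 b.1 1 (x1 + 2), b.2)
    else if x1 == y1 - 1 then (upd1 b.1 1 (x1 + 1), upd1 b.2 1 (y1 - 1))
    else (b.1, upd1 b.2 1 (y1 - 2))
  else if (i < n)%N then
    if getxb b i.+1 <= getx b i.+1 then
      (upd1 (upd1 b.1 i (getx b i - 1)) i.+1 (getx b i.+1 + 1), b.2)
    else (b.1, upd1 (upd1 b.2 i.+1 (getxb b i.+1 - 1)) i (getxb b i + 1))
  else (upd1 b.1 n (getx b n - 1), upd1 b.2 n (getxb b n + 1)).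

(* Kashiwara operator f_i; None stands for 0 *)
Definition fcr (n l : nat) (i : nat) (b : vec) : option vec :=
  let b' := f_raw n i b in
  if (i <= n)%N && inB n l b' then Some b' else None.

Definition iterf (n l i k : nat) (b : vec) : option vec :=
  iter k (obind (fcr n l i)) (Some b).

Definition eps (n l : nat) (i : nat) (b : vec) : int :=
  if i == 0%N then l%:Z - (ssum b %/ 2)%Z + pos (getx b 1 - getxb b 1)
  else if (i < n)%N then getxb b i + pos (getx b i.+1 - getxb b i.+1)
  else getxb b n.

Definition phi (n l : nat) (i : nat) (b : vec) : int :=
  if i == 0%N then l%:Z - (ssum b %/ 2)%Z + pos (getxb b 1 - getx b 1)
  else if (i < n)%N then getx b i + pos (getxb b i.+1 - getx b i.+1)
  else getx b n.

(* <lambda_j, h_i> for lambda_j = l Lambda_0 *)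
Definition lam_h (l j i : nat) : nat := if i == 0%N then l else 0%N.

Definition idx (n j a : nat) : nat := if (a <= n.+1)%N then a.-1 else ((2 * n).+1 - a)%N.

Fixpoint Bset (n l j a : nat) : vec -> Prop :=
  match a with
  | 0 => fun b => b = zerov n
  | a'.+1 => fun b => exists b0 k, Bset n l j a' b0 /\ iterf n l (idx n j a) k b0 = Some b
  end.

Fixpoint bseqc (n l j a : nat) : option vec :=
  match a with
  | 0 => Some (zerov n)
  | a'.+1 => obind (fun b => iterf n l (idx n j a) (absz (phi n l (idx n j a) b)) b)
                   (bseqc n l j a')
  end.

(* Main.v *)
Require Import Defs.
From mathcomp Require Import all_boot all_order all_algebra zify ring.
Import Order.TTheory GRing.Theory Num.Theory.
Local Open Scope ring_scope.
Set Implicit Arguments. Unset Strict Implicit.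

Arguments getx : simpl never.
Arguments getxb : simpl never.
Arguments upd1 : simpl never.
Arguments ssum : simpl never.

Lemma getx_upd s t i v k : (1 <= i)%N -> (1 <= k)%N ->
  getx (upd1 s i v, t) k = if k == i then v else getx (s, t) k.
Proof.
move=> hi hk; rewrite /getx /upd1 /= nth_set_nth /=.
have -> : (k.-1 == i.-1) = (k == i) by apply/eqP/eqP; lia.
by [].
Qed.

Lemma getxb_upd s t i v k : (1 <= i)%N -> (1 <= k)%N ->
  getxb (s, upd1 t i v) k = if k == i then v else getxb (s, t) k.
Proof.
move=> hi hk; rewrite /getxb /upd1 /= nth_set_nth /=.
have -> : (k.-1 == i.-1) = (k == i) by apply/eqP/eqP; lia.
by [].
Qed.

Lemma getx_updb s t i v k : getx (s, upd1 t i v) k = getx (s, t) k.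
Proof. by []. Qed.
Lemma getxb_updx s t i v k : getxb (upd1 s i v, t) k = getxb (s, t) k.
Proof. by []. Qed.

Lemma size_upd1 s i v : (1 <= i <= size s)%N -> size (upd1 s i v) = size s.
Proof. move=> h; rewrite /upd1 size_set_nth; lia. Qed.

Lemma sum_set_nth (s : seq int) k y : (k < size s)%N ->
  \sum_(x <- set_nth 0 s k y) x = \sum_(x <- s) x - nth 0 s k + y.
Proof.
elim: s k => [|a s IH] [|k] //= hk; rewrite !big_cons.
  ring.
rewrite IH //; ring.
Qed.

Lemma ssum_updx s t i v : (1 <= i <= size s)%N ->
  ssum (upd1 s i v, t) = ssum (s, t) - getx (s, t) i + v.
Proof.
move=> h; rewrite /ssum /= !big_cat /= /upd1 sum_set_nth; last lia.
rewrite /getx /=; ring.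
Qed.

Lemma ssum_updxb s t i v : (1 <= i <= size t)%N ->
  ssum (s, upd1 t i v) = ssum (s, t) - getxb (s, t) i + v.
Proof.
move=> h; rewrite /ssum /= !big_cat /= /upd1 sum_set_nth; last lia.
rewrite /getxb /=; ring.
Qed.

Definition nonneg (s : seq int) := all (fun v : int => 0 <= v) s.

Lemma nonneg_upd s i v : nonneg s -> 0 <= v -> nonneg (upd1 s i v).
Proof.
rewrite /nonneg /upd1 => /allP h hv; apply/allP => x.
move=> /(nthP 0) [m]; rewrite size_set_nth nth_set_nth /=.
case: eqP => _ hm <- //.
case: (ltnP m (size s)) => hms; first by apply: h; apply: mem_nth.
by rewrite nth_default.
Qed.

Lemma inBE n l x y : inB n l (x, y) =
  [&& size x == n, size y == n, nonneg x, nonneg y,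
      ssum (x, y) <= 2 * (l%:Z) & ~~ odd (absz (ssum (x, y)))].
Proof. by rewrite /inB /nonneg all_cat /= !andbA. Qed.

Lemma getx_ge0 n l b k : inB n l b -> 0 <= getx b k.
Proof.
case: b => x y; rewrite inBE => /and5P [_ _ /allP h _ _].
rewrite /getx /=; case: (ltnP k.-1 (size x)) => hk.
  by apply: h; apply: mem_nth.
by rewrite nth_default.
Qed.

Lemma getxb_ge0 n l b k : inB n l b -> 0 <= getxb b k.
Proof.
case: b => x y; rewrite inBE => /and5P [_ _ _ /allP h _].
rewrite /getxb /=; case: (ltnP k.-1 (size y)) => hk.
  by apply: h; apply: mem_nth.
by rewrite nth_default.
Qed.

Lemma ssum_ge0 n l b : inB n l b -> 0 <= ssum b.
Proof.
case: b => x y; rewrite inBE => /and5P [_ _ /allP h1 /allP h2 _].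
rewrite /ssum big_cat /=; apply: addr_ge0; rewrite big_seq; apply: sumr_ge0 => i hi.
  by apply: h1. by apply: h2.
Qed.

Lemma vec_ext n (b c : vec) : size b.1 = n -> size b.2 = n -> size c.1 = n -> size c.2 = n ->
  (forall k, (1 <= k <= n)%N -> getx b k = getx c k) ->
  (forall k, (1 <= k <= n)%N -> getxb b k = getxb c k) -> b = c.
Proof.
case: b c => x y [x' y'] /= h1 h2 h3 h4 hx hy.
congr pair; apply: (@eq_from_nth _ 0).
- by rewrite h1 h3.
- move=> k hk; have := hx k.+1; rewrite /getx /=; apply; rewrite -h1 hk; lia.
- by rewrite h2 h4.
- move=> k hk; have := hy k.+1; rewrite /getxb /=; apply; rewrite -h2 hk; lia.
Qed.

Lemma inB_zerov n l : inB n l (zerov n).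
Proof.
rewrite /zerov inBE size_nseq eqxx /nonneg.
have h : all (fun v : int => 0 <= v) (nseq n (0:int)) by apply/allP => v /nseqP [->].
rewrite h /ssum big_cat /= !big_nseq.
have -> : iter n (+%R 0) (0:int) = 0 by elim: n {h} => //= n ->; rewrite addr0.
by rewrite addr0 /=.
Qed.

Lemma getx_zerov n k : getx (zerov n) k = 0.
Proof. by rewrite /getx /= nth_nseq; case: ifP. Qed.
Lemma getxb_zerov n k : getxb (zerov n) k = 0.
Proof. by rewrite /getxb /= nth_nseq; case: ifP. Qed.
Lemma ssum_zerov n : ssum (zerov n) = 0.
Proof.
rewrite /ssum big_cat /= !big_nseq.
have -> : iter n (+%R 0) (0:int) = 0 by elim: n => //= n ->; rewrite addr0.
by rewrite addr0.
Qed.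

Ltac ifs := repeat (let H := fresh "Hifs" in case: eqP => [H|?]; [try rewrite H|]); try lia.

Definition vspec n (b : vec) (X Y : nat -> int) :=
  [/\ size b.1 = n, size b.2 = n, forall k, (1 <= k <= n)%N -> getx b k = X k
    & forall k, (1 <= k <= n)%N -> getxb b k = Y k].

Lemma vspec_uniq n b c X Y : vspec n b X Y -> vspec n c X Y -> b = c.
Proof.
case=> h1 h2 h3 h4 [h1' h2' h3' h4']; apply: (vec_ext h1 h2 h1' h2') => k hk.
  by rewrite h3 // h3'. by rewrite h4 // h4'.
Qed.

Lemma inB_size n l b : inB n l b -> size b.1 = n /\ size b.2 = n.
Proof. by case: b => x y; rewrite inBE => /and5P [/eqP -> /eqP -> _ _ _]. Qed.

Lemma vspec_self n l b : inB n l b -> vspec n b (getx b) (getxb b).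
Proof. by move=> /inB_size [h1 h2]; split. Qed.

Lemma iterfS n l i t b : iterf n l i t.+1 b = obind (fcr n l i) (iterf n l i t b).
Proof. by []. Qed.

Lemma iterfD n l i s t b : iterf n l i (s + t) b = obind (iterf n l i s) (iterf n l i t b).
Proof.
elim: s => [|s IH]; first by rewrite add0n; case: (iterf n l i t b).
rewrite addSn; have -> : iterf n l i (s + t).+1 b = obind (fcr n l i) (iterf n l i (s+t) b) by []; rewrite IH; case: (iterf n l i t b) => //= c.
Qed.

Lemma fcr_some n l i b b' : fcr n l i b = Some b' -> b' = f_raw n i b /\ inB n l b'.
Proof. by rewrite /fcr; case: ifP => // /andP [_ h] [<-]. Qed.

Lemma fcr_ok n l i b : (i <= n)%N -> inB n l (f_raw n i b) -> fcr n l i b = Some (f_raw n i b).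
Proof. by rewrite /fcr => -> ->. Qed.

Lemma iterf_inv n l i (P : vec -> Prop) k b0 b :
  (forall c c', P c -> fcr n l i c = Some c' -> P c') -> P b0 ->
  iterf n l i k b0 = Some b -> P b.
Proof.
move=> hP h0; elim: k b => [|k IH] b; first by case=> <-.
rewrite iterfS; case E: (iterf n l i k b0) => [c|] //= hc.
by apply: (hP c) => //; apply: IH.
Qed.

Lemma raw_x n i x y : (1 <= i < n)%N -> getxb (x, y) i.+1 <= getx (x, y) i.+1 ->
  f_raw n i (x, y) = (upd1 (upd1 x i (getx (x, y) i - 1)) i.+1 (getx (x, y) i.+1 + 1), y).
Proof.
move=> hi hc; rewrite /f_raw.
have -> : (i == 0%N) = false by apply/eqP; lia.
have -> : (i < n)%N by lia.
by rewrite hc.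
Qed.

Lemma raw_xb n i x y : (1 <= i < n)%N -> getx (x, y) i.+1 < getxb (x, y) i.+1 ->
  f_raw n i (x, y) = (x, upd1 (upd1 y i.+1 (getxb (x, y) i.+1 - 1)) i (getxb (x, y) i + 1)).
Proof.
move=> hi hc; rewrite /f_raw.
have -> : (i == 0%N) = false by apply/eqP; lia.
have -> : (i < n)%N by lia.
have -> : (getxb (x, y) i.+1 <= getx (x, y) i.+1) = false by apply/negbTE; rewrite -ltNge.
by [].
Qed.

Lemma raw_n n x y : (1 <= n)%N ->
  f_raw n n (x, y) = (upd1 x n (getx (x, y) n - 1), upd1 y n (getxb (x, y) n + 1)).
Proof.
move=> hn; rewrite /f_raw.
have -> : (n == 0%N) = false by apply/eqP; lia.
by rewrite ltnn.
Qed.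

Lemma raw_0a n x y : getxb (x, y) 1 <= getx (x, y) 1 ->
  f_raw n 0 (x, y) = (upd1 x 1 (getx (x, y) 1 + 2), y).
Proof. by move=> hc; rewrite /f_raw /= hc. Qed.

Lemma raw_0c n x y : getx (x, y) 1 = 0 -> 2 <= getxb (x, y) 1 ->
  f_raw n 0 (x, y) = (x, upd1 y 1 (getxb (x, y) 1 - 2)).
Proof.
move=> h0 h2; rewrite /f_raw /= h0.
have -> : (getxb (x, y) 1 <= 0) = false by apply/negbTE; rewrite -ltNge; lia.
have -> : (0 == getxb (x, y) 1 - 1) = false by apply/eqP; lia.
by [].
Qed.

Lemma inB_nonneg n l x y : inB n l (x, y) -> nonneg x /\ nonneg y.
Proof. by rewrite inBE => /and5P [_ _ -> -> _]. Qed.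

Lemma inB_same n l x y x' y' : inB n l (x, y) -> size x' = n -> size y' = n ->
  nonneg x' -> nonneg y' -> ssum (x', y') = ssum (x, y) -> inB n l (x', y').
Proof.
rewrite !inBE => /and5P [_ _ _ _ h] -> -> -> -> ->.
by rewrite !eqxx.
Qed.

Lemma neqSn (i : nat) : (i.+1 == i) = false.
Proof. by apply/eqP; lia. Qed.
Lemma neqnS (i : nat) : (i == i.+1) = false.
Proof. by apply/eqP; lia. Qed.

Ltac gsimp := rewrite ?getx_upd ?getxb_upd ?getx_updb ?getxb_updx ?neqSn ?neqnS ?eqxx; try lia.

Lemma iter_x n l i b t : (1 <= i < n)%N -> inB n l b ->
  ((0 < t)%N -> getxb b i.+1 <= getx b i.+1) -> t%:Z <= getx b i ->
  exists b', [/\ iterf n l i t b = Some b', inB n l b', ssum b' = ssum b &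
    vspec n b' (fun k => if k == i then getx b i - t%:Z
                         else if k == i.+1 then getx b i.+1 + t%:Z else getx b k) (getxb b)].
Proof.
move=> hi hb hc ht.
have hX := getx_ge0 i.+1 hb.
suff: forall s, (s <= t)%N -> exists b', [/\ iterf n l i s b = Some b', inB n l b', ssum b' = ssum b &
    vspec n b' (fun k => if k == i then getx b i - s%:Z
                         else if k == i.+1 then getx b i.+1 + s%:Z else getx b k) (getxb b)].
  by apply.
elim=> [|s IH] hs.
  exists b; split => //; case: (inB_size hb) => h1 h2; split => // k hk; ifs.
have [b' [E hb' hsum [s1 s2 s3 s4]]] := IH (ltnW hs).
case: b' E hb' hsum s1 s2 s3 s4 => x y E hb' hsum s1 s2 s3 s4 /=.
rewrite /= in s1 s2.
have e1 : getx (x, y) i = getx b i - s%:Z by rewrite s3; [ifs|lia].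
have e2 : getx (x, y) i.+1 = getx b i.+1 + s%:Z by rewrite s3; [ifs|lia].
have e3 : getxb (x, y) i.+1 = getxb b i.+1 by rewrite s4; lia.
have [nx ny] := inB_nonneg hb'.
rewrite E /=.
have R : f_raw n i (x, y) = (upd1 (upd1 x i (getx (x, y) i - 1)) i.+1 (getx (x, y) i.+1 + 1), y).
  by apply: raw_x => //; rewrite e2 e3; have := hc ltac:(lia); lia.
exists (f_raw n i (x, y)); rewrite R.
set c := (upd1 _ _ _, y).
have sc1 : size c.1 = n by rewrite /c /= !size_upd1 ?s1 //; try lia; rewrite size_upd1; lia.
have hsc : ssum c = ssum (x, y).
  rewrite /c ssum_updx; last by rewrite size_upd1; lia.
  rewrite ssum_updx; last by lia.
  by gsimp.
have hc' : inB n l c.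
  apply: (inB_same hb') => //.
  apply: nonneg_upd; [apply: nonneg_upd => //|]; lia.
split => //; first by rewrite fcr_ok ?R //; lia.
  by rewrite hsc.
split => // k hk; rewrite /c; gsimp.
rewrite e1 e2 s3 //; ifs.
Qed.

Lemma ssum_ge0' x y : nonneg x -> nonneg y -> 0 <= ssum (x, y).
Proof.
move=> /allP h1 /allP h2.
rewrite /ssum big_cat /=; apply: addr_ge0; rewrite big_seq; apply: sumr_ge0 => i hi.
  by apply: h1. by apply: h2.
Qed.

Lemma iter_xb n l i b t : (1 <= i < n)%N -> inB n l b ->
  getx b i.+1 + t%:Z <= getxb b i.+1 ->
  exists b', [/\ iterf n l i t b = Some b', inB n l b', ssum b' = ssum b &
    vspec n b' (getx b) (fun k => if k == i.+1 then getxb b i.+1 - t%:Z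
                         else if k == i then getxb b i + t%:Z else getxb b k)].
Proof.
move=> hi hb hc.
have hX := getx_ge0 i.+1 hb.
suff: forall s, (s <= t)%N -> exists b', [/\ iterf n l i s b = Some b', inB n l b', ssum b' = ssum b &
    vspec n b' (getx b) (fun k => if k == i.+1 then getxb b i.+1 - s%:Z
                         else if k == i then getxb b i + s%:Z else getxb b k)].
  by apply.
elim=> [|s IH] hs.
  exists b; split => //; case: (inB_size hb) => h1 h2; split => // k hk; ifs.
have [b' [E hb' hsum [s1 s2 s3 s4]]] := IH (ltnW hs).
case: b' E hb' hsum s1 s2 s3 s4 => x y E hb' hsum s1 s2 s3 s4 /=.
rewrite /= in s1 s2.
have e1 : getxb (x, y) i.+1 = getxb b i.+1 - s%:Z by rewrite s4; [ifs|lia].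
have e2 : getxb (x, y) i = getxb b i + s%:Z by rewrite s4; [ifs|lia].
have e3 : getx (x, y) i.+1 = getx b i.+1 by rewrite s3; lia.
have [nx ny] := inB_nonneg hb'.
have hY := getxb_ge0 i hb'.
rewrite E /=.
have R : f_raw n i (x, y) = (x, upd1 (upd1 y i.+1 (getxb (x, y) i.+1 - 1)) i (getxb (x, y) i + 1)).
  by apply: raw_xb => //; rewrite e1 e3; lia.
exists (f_raw n i (x, y)); rewrite R.
set c := (x, upd1 _ _ _).
have sc1 : size c.2 = n by rewrite /c /= !size_upd1 ?s2 //; try lia; rewrite size_upd1; lia.
have hsc : ssum c = ssum (x, y).
  rewrite /c ssum_updxb; last by rewrite size_upd1; lia.
  rewrite ssum_updxb; last by lia.
  by gsimp.
have hc' : inB n l c.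
  apply: (inB_same hb') => //.
  apply: nonneg_upd; [apply: nonneg_upd => //|]; lia.
split => //; first by rewrite fcr_ok ?R //; lia.
  by rewrite hsc.
split => // k hk; rewrite /c; gsimp; try by rewrite s3.
rewrite e1 e2 s4 //; ifs.
Qed.

Lemma iter_n n l b t : (1 <= n)%N -> inB n l b -> t%:Z <= getx b n ->
  exists b', [/\ iterf n l n t b = Some b', inB n l b', ssum b' = ssum b &
    vspec n b' (fun k => if k == n then getx b n - t%:Z else getx b k)
               (fun k => if k == n then getxb b n + t%:Z else getxb b k)].
Proof.
move=> hn hb hc.
suff: forall s, (s <= t)%N -> exists b', [/\ iterf n l n s b = Some b', inB n l b', ssum b' = ssum b &
    vspec n b' (fun k => if k == n then getx b n - s%:Z else getx b k)
               (fun k => if k == n then getxb b n + s%:Z else getxb b k)].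
  by apply.
have hY := getxb_ge0 n hb.
elim=> [|s IH] hs.
  exists b; split => //; case: (inB_size hb) => h1 h2; split => // k hk; ifs.
have [b' [E hb' hsum [s1 s2 s3 s4]]] := IH (ltnW hs).
case: b' E hb' hsum s1 s2 s3 s4 => x y E hb' hsum s1 s2 s3 s4 /=.
rewrite /= in s1 s2.
have e1 : getx (x, y) n = getx b n - s%:Z by rewrite s3; [ifs|lia].
have e2 : getxb (x, y) n = getxb b n + s%:Z by rewrite s4; [ifs|lia].
have [nx ny] := inB_nonneg hb'.
rewrite E /=.
have R := raw_n x y hn.
exists (f_raw n n (x, y)); rewrite R.
set c := (upd1 _ _ _, upd1 _ _ _).
have hsc : ssum c = ssum (x, y).
  rewrite /c ssum_updx; last by lia.
  rewrite ssum_updxb; last by lia.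
  by gsimp.
have hc' : inB n l c.
  apply: (inB_same hb') => //; rewrite /c /=; try (rewrite size_upd1; lia).
  apply: nonneg_upd => //; lia.
  apply: nonneg_upd => //; lia.
split => //; first by rewrite fcr_ok ?R //.
  by rewrite hsc.
split => //; try (rewrite /c /= size_upd1; lia).
  move=> k hk; rewrite /c; gsimp; rewrite e1 s3 //; ifs.
move=> k hk; rewrite /c; gsimp; rewrite e2 s4 //; ifs.
Qed.

Lemma iter_0up n l t : (1 <= n)%N -> (t <= l)%N ->
  exists b', [/\ iterf n l 0 t (zerov n) = Some b', inB n l b', ssum b' = 2 * t%:Z &
    vspec n b' (fun k => if k == 1%N then 2 * t%:Z else 0) (fun _ => 0)].
Proof.
move=> hn; elim: t => [|s IH] hs.
  exists (zerov n); split => //; first exact: inB_zerov.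
    by rewrite ssum_zerov.
  split; rewrite ?size_nseq // => k hk; rewrite ?getx_zerov ?getxb_zerov; ifs.
have [b' [E hb' hsum [s1 s2 s3 s4]]] := IH (ltnW hs).
case: b' E hb' hsum s1 s2 s3 s4 => x y E hb' hsum s1 s2 s3 s4 /=.
rewrite /= in s1 s2.
have e1 : getx (x, y) 1 = 2 * s%:Z by rewrite s3; [ifs|lia].
have e2 : getxb (x, y) 1 = 0 by rewrite s4; lia.
have [nx ny] := inB_nonneg hb'.
rewrite E /=.
have R : f_raw n 0 (x, y) = (upd1 x 1 (getx (x, y) 1 + 2), y).
  by apply: raw_0a; rewrite e1 e2; lia.
exists (f_raw n 0 (x, y)); rewrite R.
set c := (upd1 _ _ _, y).
have hsc : ssum c = 2 * s.+1%:Z.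
  rewrite /c ssum_updx; last by lia.
  rewrite hsum; lia.
have hc' : inB n l c.
  rewrite /c inBE size_upd1; last by lia.
  rewrite s1 s2 eqxx /= ny nonneg_upd //=; last by lia.
  rewrite -/c hsc; apply/andP; split; lia.
split => //; first by rewrite fcr_ok ?R //.
split => //; try (rewrite /c /= size_upd1; lia).
  move=> k hk; rewrite /c; gsimp; rewrite e1 s3 //; ifs.
Qed.

Lemma iter_0down n l b t : (1 <= n)%N -> inB n l b -> getx b 1 = 0 -> 2 * t%:Z <= getxb b 1 ->
  exists b', [/\ iterf n l 0 t b = Some b', inB n l b', ssum b' = ssum b - 2 * t%:Z &
    vspec n b' (getx b) (fun k => if k == 1%N then getxb b 1 - 2 * t%:Z else getxb b k)].
Proof.
move=> hn hb h0 hc.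
suff: forall s, (s <= t)%N -> exists b', [/\ iterf n l 0 s b = Some b', inB n l b', ssum b' = ssum b - 2 * s%:Z &
    vspec n b' (getx b) (fun k => if k == 1%N then getxb b 1 - 2 * s%:Z else getxb b k)].
  by apply.
elim=> [|s IH] hs.
  exists b; split => //; first by lia.
  case: (inB_size hb) => h1 h2; split => // k hk; ifs.
have [b' [E hb' hsum [s1 s2 s3 s4]]] := IH (ltnW hs).
case: b' E hb' hsum s1 s2 s3 s4 => x y E hb' hsum s1 s2 s3 s4 /=.
rewrite /= in s1 s2.
have e1 : getx (x, y) 1 = 0 by rewrite s3; lia.
have e2 : getxb (x, y) 1 = getxb b 1 - 2 * s%:Z by rewrite s4; [ifs|lia].
have [nx ny] := inB_nonneg hb'.
rewrite E /=.
have R : f_raw n 0 (x, y) = (x, upd1 y 1 (getxb (x, y) 1 - 2)).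
  by apply: raw_0c => //; rewrite e2; lia.
exists (f_raw n 0 (x, y)); rewrite R.
set c := (x, upd1 _ _ _).
have hs0 := ssum_ge0 hb.
have hsc : ssum c = ssum b - 2 * s.+1%:Z.
  rewrite /c ssum_updxb; last by lia.
  rewrite hsum; gsimp.
have hc0 : 0 <= ssum c.
  apply: ssum_ge0' => //; apply: nonneg_upd => //; lia.
have hc' : inB n l c.
  have := hb'; rewrite /c !inBE size_upd1; last by lia.
  rewrite s1 s2 eqxx /= nx nonneg_upd //=; last by lia.
  rewrite -/c hsc hsum => /andP [h1 h2]; apply/andP; split; lia.
split => //; first by rewrite fcr_ok ?R //.
split => //; try (rewrite /c /= size_upd1; lia).
move=> k hk; rewrite /c; gsimp; rewrite e2 s4 //; ifs.
Qed.

Lemma vspec_eq n b X Y X' Y' : vspec n b X Y ->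
  (forall k, (1 <= k <= n)%N -> X k = X' k) -> (forall k, (1 <= k <= n)%N -> Y k = Y' k) ->
  vspec n b X' Y'.
Proof.
case=> h1 h2 h3 h4 hX hY; split => //.
  by move=> m hm; rewrite -hX // h3.
by move=> m hm; rewrite -hY // h4.
Qed.

Lemma iterf_inB n l i k b0 b : inB n l b0 -> iterf n l i k b0 = Some b -> inB n l b.
Proof.
move=> h0; apply: (iterf_inv (P := inB n l)) => // c c' _ /fcr_some [_ ->] //.
Qed.

Lemma Bset_inB n l j a b : Bset n l j a b -> inB n l b.
Proof.
elim: a b => [|a IH] b /=; first by move=> ->; exact: inB_zerov.
by case=> b0 [k [/IH h0 hk]]; apply: (iterf_inB h0 hk).
Qed.

Lemma idx_lo n j a : (1 <= a <= n.+1)%N -> idx n j a = a.-1.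
Proof. by rewrite /idx => /andP [_ ->]. Qed.
Lemma idx_hi n j a : (n.+1 < a)%N -> idx n j a = ((2 * n).+1 - a)%N.
Proof. by rewrite /idx => h; have -> : (a <= n.+1)%N = false by apply/negbTE; rewrite -ltnNge. Qed.

Definition Px n a b := (forall i, (a < i <= n)%N -> getx b i = 0) /\
                       (forall i, (1 <= i <= n)%N -> getxb b i = 0).

Lemma ssum_single n (b : vec) i v : (1 <= i <= n)%N ->
  vspec n b (fun k => if k == i then v else 0) (fun _ => 0) -> ssum b = v.
Proof.
move=> hi hb.
pose c : vec := (upd1 (nseq n 0) i v, nseq n 0).
have hc : vspec n c (fun k => if k == i then v else 0) (fun _ => 0).
  split; rewrite /c /= ?size_upd1 ?size_nseq //; try lia.

    move=> k hk; gsimp; rewrite /getx /= nth_nseq if_same; ifs.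
  by move=> k hk; rewrite /getxb /= nth_nseq if_same.
rewrite (vspec_uniq hb hc) /c ssum_updx ?size_nseq //.
have := ssum_zerov n; rewrite /zerov => ->.
rewrite /getx /= nth_nseq if_same; ring.
Qed.

Lemma inB_sum n l b : inB n l b -> ssum b <= 2 * l%:Z /\ ~~ odd (absz (ssum b)).
Proof. by case: b => x y; rewrite inBE => /and5P [_ _ _ _ /andP [h1 h2]]. Qed.

Lemma Bx n l j a : (2 <= n)%N -> (1 <= a <= n)%N -> forall b,
  Bset n l j a b <-> inB n l b /\ Px n a b.
Proof.
move=> hn; elim: a => [|a IH] // ha b.
case: (posnP a) => [a0|apos].
-
  subst a; rewrite /= idx_lo //; split.
  + case=> b0 [k [-> hk]].
    apply: (iterf_inv (P := fun c => inB n l c /\ Px n 1 c)) hk.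
    * move=> [x y] c' [hc [px py]] /fcr_some [-> hc']; split => //.
      rewrite raw_0a; last by rewrite py; [exact: getx_ge0 hc|lia].
      split => i hi; gsimp; first by ifs; rewrite px.
      by rewrite py.
    * split; first exact: inB_zerov.
      by split => i hi; rewrite ?getx_zerov ?getxb_zerov.
  + case=> hb [px py].
    have hv := getx_ge0 1 hb.
    have hs : vspec n b (fun k => if k == 1%N then getx b 1 else 0) (fun _ => 0).
      apply: (vspec_eq (vspec_self hb)) => k hk; ifs.
      by rewrite px //; lia.
      by rewrite py.
    have hsum := ssum_single (ltac:(lia) : (1 <= 1 <= n)%N) hs.
    have [h1 h2] := inB_sum hb.
    have [b' [E _ _ hs']] := @iter_0up n l ((absz (getx b 1))./2) ltac:(lia) ltac:(lia).
    exists (zerov n), (absz (getx b 1))./2; split => //; rewrite E; congr Some.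
    apply: (vspec_uniq hs'); apply: (vspec_eq hs) => // k hk; ifs.
- have IHa := IH ltac:(lia).
  rewrite /= idx_lo; last by lia.
  rewrite /=; split.
  + case=> b0 [k [/IHa [hb0 [px0 py0]] hk]].
    apply: (iterf_inv (P := fun c => inB n l c /\ Px n a.+1 c)) hk.
    * move=> [x y] c' [hc [px py]] /fcr_some [-> hc']; split => //.
      rewrite raw_x; first last.
      - by rewrite py; [exact: getx_ge0 hc|lia].
      - lia.
      split => i hi; gsimp; first by ifs; rewrite px.
      by rewrite py.
    * split => //; split => // i hi; apply: px0; lia.
  + case=> hb [px py].
    case: b hb px py => x y hb px py.
    have [sx sy] := inB_size hb; rewrite /= in sx sy.
    have [nx ny] := inB_nonneg hb.
    have hq := getx_ge0 a.+1 hb.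
    have hxa := getx_ge0 a hb.
    set q := getx (x, y) a.+1.
    pose b0 : vec := (upd1 (upd1 x a (getx (x, y) a + q)) a.+1 0, y).
    have hb0 : inB n l b0.
      apply: (inB_same hb) => //.
      - by rewrite !size_upd1 ?sx //; try lia; rewrite size_upd1; lia.
      - apply: nonneg_upd => //; apply: nonneg_upd => //; lia.
      - rewrite ssum_updx; last by rewrite size_upd1; lia.
        rewrite ssum_updx; last by lia.
        by gsimp.
    have hB0 : Bset n l j a b0.
      apply/IHa; split => //; split => i hi; rewrite /b0; gsimp.
        by ifs; rewrite px //; lia.
      by rewrite py.
    have [b' [E _ _ hs']] := @iter_x n l a b0 (absz q) ltac:(lia) hb0
       (fun _ => ltac:(rewrite /b0; gsimp; rewrite py; lia))
       ltac:(rewrite /b0; gsimp).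
    exists b0, (absz q); split => //; rewrite E; congr Some.
    apply: (vspec_uniq hs'); apply: (vspec_eq (vspec_self hb)) => k hk; rewrite /b0; gsimp.
    ifs.
Qed.

Definition Qx n a b := forall i, (1 <= i <= n - a)%N -> getxb b i = 0.

Lemma Bxb n l j a : (2 <= n)%N -> (1 <= a <= n)%N -> forall b,
  Bset n l j (n + a) b <-> inB n l b /\ Qx n a b.
Proof.
move=> hn; elim: a => [|a IH] // ha b.
case: (posnP a) => [a0|apos].
-
  subst a; rewrite addn1 /= idx_lo; last by lia.
  rewrite /=; split.
  + case=> b0 [k [/(@Bx n l j n hn ltac:(lia) _) [hb0 [px0 py0]] hk]].
    apply: (iterf_inv (P := fun c => inB n l c /\ Qx n 1 c)) hk.
    * move=> [x y] c' [hc qy] /fcr_some [-> hc']; split => //.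
      rewrite raw_n; last by lia.
      move=> i hi; gsimp; ifs; rewrite qy //.
    * split => //; move=> i hi; apply: py0; lia.
  + case=> hb qy.
    case: b hb qy => x y hb qy.
    have [sx sy] := inB_size hb; rewrite /= in sx sy.
    have [nx ny] := inB_nonneg hb.
    have hq := getxb_ge0 n hb.
    have hxa := getx_ge0 n hb.
    set q := getxb (x, y) n.
    pose b0 : vec := (upd1 x n (getx (x, y) n + q), upd1 y n 0).
    have hb0 : inB n l b0.
      apply: (inB_same hb) => //.
      - by rewrite !size_upd1 ?sx //; try lia.
      - by rewrite !size_upd1 ?sy //; try lia.
      - apply: nonneg_upd => //; lia.
      - apply: nonneg_upd => //; lia.
      - rewrite ssum_updx; last by lia.
        rewrite ssum_updxb; last by lia.
        by gsimp.
    have hB0 : Bset n l j n b0.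
      apply/(@Bx n l j n hn ltac:(lia) _); split => //; split => i hi; rewrite /b0; gsimp.
      ifs; rewrite qy //; lia.
    have [b' [E _ _ hs']] := @iter_n n l b0 (absz q) ltac:(lia) hb0
       ltac:(rewrite /b0; gsimp).
    exists b0, (absz q); split => //; rewrite E; congr Some.
    apply: (vspec_uniq hs'); apply: (vspec_eq (vspec_self hb)) => k hk; rewrite /b0; gsimp.
      ifs.
    ifs.
- have IHa := IH ltac:(lia).
  have hidx : idx n j (n + a).+1 = (n - a)%N by rewrite idx_hi; lia.
  rewrite addnS /= hidx; split.
  + case=> b0 [k [/IHa [hb0 qy0] hk]].
    apply: (iterf_inv (P := fun c => inB n l c /\ Qx n a.+1 c)) hk.
    * move=> [x y] c' [hc qy] /fcr_some [-> hc']; split => //.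
      case: (lerP (getxb (x, y) (n - a).+1) (getx (x, y) (n - a).+1)) => hcmp.
        by rewrite raw_x //; lia.
      rewrite raw_xb //; last by lia.
      move=> i hi; gsimp; ifs; rewrite qy //; lia.
    * split => // i hi; apply: qy0; lia.
  + case=> hb qy.
    case: b hb qy => x y hb qy.
    have [sx sy] := inB_size hb; rewrite /= in sx sy.
    have [nx ny] := inB_nonneg hb.
    set i := (n - a)%N.
    have hi : (1 <= i < n)%N by rewrite /i; lia.
    have hX1 := getx_ge0 i.+1 hb.
    have hXi := getx_ge0 i hb.
    have hY1 := getxb_ge0 i.+1 hb.
    have hYi := getxb_ge0 i hb.
    set p := getxb (x, y) i.+1.
    set q := getxb (x, y) i.
    set X1 := getx (x, y) i.+1.
    set Xi := getx (x, y) i.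
    set r := absz (Num.max (X1 - p) 0).
    pose b0 : vec := (upd1 (upd1 x i (Xi + r%:Z)) i.+1 (X1 - r%:Z),
                      upd1 (upd1 y i 0) i.+1 (p + q)).
    have hb0 : inB n l b0.
      apply: (inB_same hb) => //.
      - by rewrite !size_upd1 ?sx //; try lia; rewrite size_upd1; lia.
      - by rewrite !size_upd1 ?sy //; try lia; rewrite size_upd1; lia.
      - apply: nonneg_upd => //; [apply: nonneg_upd => //|]; lia.
      - apply: nonneg_upd => //; [apply: nonneg_upd => //|]; lia.
      - rewrite ssum_updx; last by rewrite size_upd1; lia.
        rewrite ssum_updx; last by lia.
        rewrite ssum_updxb; last by rewrite size_upd1; lia.
        rewrite ssum_updxb; last by lia.
        by gsimp.
    have hB0 : Bset n l j (n + a) b0.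
      apply/IHa; split => // k hk; rewrite /b0; gsimp.
      ifs; rewrite qy //; lia.
    have [b1 [E1 hb1 _ hs1]] := @iter_xb n l i b0 (absz q) hi hb0
       ltac:(rewrite /b0; gsimp).
    have [e1 e2 e3 e4] := hs1.
    have [b2 [E2 _ _ hs2]] := @iter_x n l i b1 r hi hb1
       (fun _ => ltac:(rewrite e3 ?e4; try lia; rewrite /b0; gsimp))
       ltac:(rewrite e3; try lia; rewrite /b0; gsimp).
    exists b0, (r + absz q)%N; split => //; rewrite iterfD E1 /= E2; congr Some.
    apply: (vspec_uniq hs2); apply: (vspec_eq (vspec_self hb)) => k hk.
      rewrite !e3; try lia; rewrite /b0; gsimp; ifs.
    rewrite e4 //; rewrite /b0; gsimp; ifs.
Qed.

Lemma eps_mid n l i b : (1 <= i < n)%N -> eps n l i b = getxb b i + pos (getx b i.+1 - getxb b i.+1).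
Proof.
move=> h; rewrite /eps; have -> : (i == 0%N) = false by apply/eqP; lia.
by have -> : (i < n)%N by lia.
Qed.
Lemma phi_mid n l i b : (1 <= i < n)%N -> phi n l i b = getx b i + pos (getxb b i.+1 - getx b i.+1).
Proof.
move=> h; rewrite /phi; have -> : (i == 0%N) = false by apply/eqP; lia.
by have -> : (i < n)%N by lia.
Qed.
Lemma eps_n n l b : (1 <= n)%N -> eps n l n b = getxb b n.
Proof. move=> h; rewrite /eps ltnn; have -> : (n == 0%N) = false by apply/eqP; lia. by []. Qed.
Lemma phi_n n l b : (1 <= n)%N -> phi n l n b = getx b n.
Proof. move=> h; rewrite /phi ltnn; have -> : (n == 0%N) = false by apply/eqP; lia. by []. Qed.

Lemma bseq_x n l j a : (2 <= n)%N -> (1 <= l)%N -> (1 <= a <= n)%N ->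
  exists b, [/\ bseqc n l j a = Some b, inB n l b, ssum b = 2 * l%:Z &
    vspec n b (fun k => if k == a then 2 * l%:Z else 0) (fun _ => 0)].
Proof.
move=> hn hl; elim: a => [|a IH] // ha.
case: (posnP a) => [a0|apos].
- subst a; rewrite /= idx_lo //.
  have -> : phi n l 0 (zerov n) = l%:Z.
    by rewrite /phi /= ssum_zerov getx_zerov getxb_zerov /pos; lia.
  have [b' [E hb hs hv]] := @iter_0up n l l ltac:(lia) (leqnn l).
  by exists b'; split.
- have [b [E hb hs [s1 s2 s3 s4]]] := IH ltac:(lia).
  rewrite /= E /= idx_lo; last by lia.
  rewrite /= phi_mid; last by lia.
  rewrite (s3 a) ?(s3 a.+1) ?s4; try lia.
  rewrite eqxx neqSn.
  have -> : absz ((2 * l%:Z + pos (0 - 0))%R) = (2 * l)%N by rewrite /pos; lia.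
  have [b' [E' hb' hs' hv']] := @iter_x n l a b (2 * l)%N ltac:(lia) hb
     (fun _ => ltac:(rewrite s3 ?s4; try lia; rewrite neqSn; lia))
     ltac:(rewrite s3; try lia; rewrite eqxx; lia).
  exists b'; split => //; first by rewrite hs'.
  apply: (vspec_eq hv') => k hk; rewrite ?s3 ?s4 //; ifs.
Qed.

Lemma bseq_xb n l j a : (2 <= n)%N -> (1 <= l)%N -> (1 <= a <= n)%N ->
  exists b, [/\ bseqc n l j (n + a) = Some b, inB n l b, ssum b = 2 * l%:Z &
    vspec n b (fun _ => 0) (fun k => if k == (n - a).+1 then 2 * l%:Z else 0)].
Proof.
move=> hn hl; elim: a => [|a IH] // ha.
case: (posnP a) => [a0|apos].
- subst a; rewrite addn1.
  have [b [E hb hs [s1 s2 s3 s4]]] := @bseq_x n l j n hn hl ltac:(lia).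
  rewrite /= E /= idx_lo; last by lia.
  rewrite /= phi_n; last by lia.
  rewrite s3 ?eqxx; try lia.
  have -> : absz ((2 * l%:Z)%R) = (2 * l)%N by lia.
  have [b' [E' hb' hs' hv']] := @iter_n n l b (2 * l)%N ltac:(lia) hb
     ltac:(rewrite s3; try lia; rewrite eqxx; lia).
  exists b'; split => //; first by rewrite hs'.
  apply: (vspec_eq hv') => k hk; rewrite ?s3 ?s4 //; ifs.
- have [b [E hb hs [s1 s2 s3 s4]]] := IH ltac:(lia).
  rewrite addnS /= E /= idx_hi; last by lia.
  have -> : ((2 * n).+1 - (n + a).+1)%N = (n - a.+1).+1 by lia.
  have ei : (n - a)%N = (n - a.+1).+1 by lia.
  rewrite ei in s4.
  rewrite phi_mid; last by lia.
  rewrite (s3 (n - a.+1).+1) ?(s3 (n - a.+1).+2) ?(s4 (n - a.+1).+2); try lia.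
  rewrite eqxx.
  have -> : absz ((0 + pos (2 * l%:Z - 0))%R) = (2 * l)%N by rewrite /pos; lia.
  have [b' [E' hb' hs' hv']] := @iter_xb n l (n - a.+1).+1 b (2 * l)%N ltac:(lia) hb
     ltac:(rewrite s3 ?s4; try lia; rewrite eqxx; lia).
  exists b'; split => //; first by rewrite hs'.
  apply: (vspec_eq hv') => k hk; rewrite ?s3 ?s4 //; ifs.
Qed.

Lemma vspec_e1 n m v : (m < n)%N ->
  vspec n (set_nth 0 (nseq n 0) m v, nseq n 0) (fun k => if k == m.+1 then v else 0) (fun _ => 0).
Proof.
move=> hm; split; rewrite /= ?size_set_nth ?size_nseq; try lia.
  move=> k hk; rewrite /getx /= nth_set_nth /= nth_nseq if_same; ifs.
by move=> k hk; rewrite /getxb /= nth_nseq if_same.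
Qed.

Lemma vspec_e2 n m v : (m < n)%N ->
  vspec n (nseq n 0, set_nth 0 (nseq n 0) m v) (fun _ => 0) (fun k => if k == m.+1 then v else 0).
Proof.
move=> hm; split; rewrite /= ?size_set_nth ?size_nseq; try lia.
  by move=> k hk; rewrite /getx /= nth_nseq if_same.
move=> k hk; rewrite /getxb /= nth_set_nth /= nth_nseq if_same; ifs.
Qed.

Lemma vspec_zerov n : vspec n (zerov n) (fun _ => 0) (fun _ => 0).
Proof.
split; rewrite /= ?size_nseq // => k hk; by rewrite ?getx_zerov ?getxb_zerov.
Qed.

Lemma eps_ge0 n l i b : inB n l b -> (1 <= i <= n)%N -> 0 <= eps n l i b.
Proof.
move=> hb hi; case: (ltnP i n) => h.
  rewrite eps_mid; last by lia.
  have := getxb_ge0 i hb; rewrite /pos; lia.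
have -> : i = n by lia.
rewrite eps_n; last by lia.
exact: (getxb_ge0 n hb).
Qed.

Lemma idx_range n j a : (2 <= a <= 2 * n)%N -> (1 <= idx n j a <= n)%N.
Proof. rewrite /idx; case: ifP; lia. Qed.

Unset Implicit Arguments.
Set Strict Implicit.

Theorem mainTheorem8 (n l : nat) (hn : (2 <= n)%N) (hl : (1 <= l)%N) :
  let d := (2 * n)%N in
  (* (II) *)
  (forall j : nat, (1 <= j)%N -> forall b : vec, Bset n l j d b <-> inB n l b) /\
  (* (III) *)
  (forall j a : nat, (1 <= j)%N -> (1 <= a <= d)%N -> forall b : vec,
      Bset n l j a.-1 b -> (lam_h l j (idx n j a))%:Z <= eps n l (idx n j a) b) /\
  (* (IV') *)
  (forall j a : nat, (1 <= j)%N -> (1 <= a <= d)%N ->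
      let inext := if (a < d)%N then idx n j a.+1 else idx n j.+1 1 in
      exists b : vec, bseqc n l j a = Some b /\
        eps n l inext b = 0 /\ 0 < phi n l inext b) /\
  (forall j : nat, (1 <= j)%N ->
      bseqc n l j.+1 0 =
      obind (iterf n l (idx n j.+1 1) (lam_h l j.+1 (idx n j.+1 1))) (bseqc n l j d)) /\
  (* explicit descriptions of B^(j)_a *)
  (forall j : nat, (1 <= j)%N -> forall b : vec, Bset n l j 0 b <-> b = zerov n) /\
  (forall j a : nat, (1 <= j)%N -> (1 <= a <= n)%N -> forall b : vec,
      Bset n l j a b <->
      (inB n l b /\ (forall i : nat, (a < i <= n)%N -> getx b i = 0)
                 /\ (forall i : nat, (1 <= i <= n)%N -> getxb b i = 0))) /\
  (forall j a : nat, (1 <= j)%N -> (1 <= a <= n.-1)%N -> forall b : vec,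
      Bset n l j (n + a) b <->
      (inB n l b /\ (forall i : nat, (1 <= i <= n - a)%N -> getxb b i = 0))) /\
  (* explicit descriptions of b^(j)_a *)
  (forall j : nat, (1 <= j)%N -> bseqc n l j 0 = Some (zerov n)) /\
  (forall j a : nat, (1 <= j)%N -> (1 <= a <= n)%N ->
      bseqc n l j a = Some (set_nth 0 (nseq n 0) a.-1 (2 * l%:Z), nseq n 0)) /\
  (forall j a : nat, (1 <= j)%N -> (1 <= a <= n)%N ->
      bseqc n l j (n + a) = Some (nseq n 0, set_nth 0 (nseq n 0) (n - a) (2 * l%:Z))).
Proof.
cbv zeta.
have ed : (2 * n)%N = (n + n)%N by lia.
split.
  move=> j hj b; rewrite ed; have H := @Bxb n l j n hn ltac:(lia) b.
  split; first by case/H.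
  by move=> hb; apply/H; split => // i hi; lia.
split.
  move=> j a hj ha b hB.
  case: (ltnP a 2) => ha2.
    have -> : a = 1%N by lia.
    move: hB; have -> : a.-1 = 0%N by lia.
    move=> /= ->; rewrite idx_lo //= /eps /= ssum_zerov getx_zerov getxb_zerov /pos /lam_h /=; lia.
  have hi := @idx_range n j a ltac:(lia).
  rewrite /lam_h; have -> : (idx n j a == 0%N) = false by apply/eqP; lia.
  exact: eps_ge0 (Bset_inB hB) hi.
split.
  move=> j a hj ha.
  case: (leqP a n) => han.
    have [b [E hb hs [s1 s2 s3 s4]]] := @bseq_x n l j a hn hl ltac:(lia).
    exists b; split => //.
    have -> : (a < 2 * n)%N by lia.
    rewrite idx_lo; last by lia.
    rewrite /=.
    case: (ltnP a n) => han'.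
      rewrite eps_mid ?phi_mid; try lia.
      rewrite (s3 a) ?(s3 a.+1) ?s4; try lia.
      rewrite eqxx neqSn /pos; lia.
    have ean : a = n by lia.
    subst a; rewrite eps_n ?phi_n; try lia.
    rewrite s3 ?s4; try lia; rewrite eqxx; lia.
  have ea : a = (n + (a - n))%N by lia.
  have [b [E hb hs [s1 s2 s3 s4]]] := @bseq_xb n l j (a - n) hn hl ltac:(lia).
  exists b; rewrite ea E; split => //.
  case: (ltnP (n + (a - n)) (2 * n)) => ha2.
    rewrite idx_hi; last by lia.
    have -> : ((2 * n).+1 - (n + (a - n)).+1)%N = (n - (a - n))%N by lia.
    rewrite eps_mid ?phi_mid; try lia.
    rewrite (s4 (n - (a - n))%N) ?(s4 (n - (a - n)).+1%N) ?s3; try lia.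
    rewrite eqxx neqnS /pos; lia.
  rewrite idx_lo //= /eps /phi /=.
  have e1 : (n - (a - n)).+1 = 1%N by lia.
  rewrite e1 in s4.
  rewrite hs s3 ?s4; try lia; rewrite eqxx /pos; lia.
split.
  move=> j hj; rewrite /= idx_lo //= /lam_h /= ed.
  have [b [E hb hs [s1 s2 s3 s4]]] := @bseq_xb n l j n hn hl ltac:(lia).
  rewrite E /=.
  have e1 : (n - n).+1 = 1%N by lia.
  rewrite e1 in s4.
  have [b' [E' hb' hs' hv']] := @iter_0down n l b l ltac:(lia) hb
     ltac:(rewrite s3; lia) ltac:(rewrite s4 ?eqxx; lia).
  rewrite E'; congr Some.
  apply: (vspec_uniq (vspec_zerov n)); apply: (vspec_eq hv') => k hk.
    by rewrite s3.
  rewrite s4 //; ifs; rewrite s4 //; ifs.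
split; first by move=> j hj b.
split; first by move=> j a hj ha b; exact: Bx.
split; first by move=> j a hj ha b; apply: Bxb => //; lia.
split; first by [].
split.
  move=> j a hj ha.
  have [b [E hb hs hv]] := @bseq_x n l j a hn hl ha.
  rewrite E; congr Some; apply: (vspec_uniq hv).
  apply: (vspec_eq (@vspec_e1 n a.-1 (2 * l%:Z) ltac:(lia))) => // k hk; ifs.
move=> j a hj ha.
have [b [E hb hs hv]] := @bseq_xb n l j a hn hl ha.
rewrite E; congr Some; apply: (vspec_uniq hv).
exact: (@vspec_e2 n (n - a) (2 * l%:Z) ltac:(lia)).
Qed.
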